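(* Suppose Assumption 1 (context) holds. For ARDCA as in the context, every $k\ge0$ (every realization) and every $u\in\mathbb{D}$, $$-\sum_{i=1}^n\sigma_1(u_i,\tilde z_i^k)-\sigma_2(u,v^k)=\langle\triangle(x^*(v^k),ny^k),u\rangle+D(u)+f(x^*(v^k))+\frac1n\phi(ny^k),$$ where $\triangle(x,y)=[(A^Tx-y)^T/n,(Bx+b)^T,g_1(x),\dots,g_m(x)]^T$ for $x\in\mathbb{R}^t,y\in\mathbb{R}^n$, and $\phi(y)=\sum_{i=1}^n\phi_i(y_i)$.
   Context: Data: integers $n,t\ge1$, $p,m\ge0$; $A\in\mathbb{R}^{t\times n}$ (columns $A_j$), $B\in\mathbb{R}^{p\times t}$ (rows $B_{j,:}$), $b\in\mathbb{R}^p$; $f:\mathbb{R}^t\to\mathbb{R}$, $\phi_i:\mathbb{R}\to\mathbb{R}$, $g_i:\mathbb{R}^t\to\mathbb{R}$. Primal problem: minimize $f(x)+\frac1n\sum_i\phi_i(A_i^Tx)$ s.t. $Bx+b=0$, $g_i(x)\le0$. Assumption 1: $f$ $\mu$-strongly convex ($\mu>0$); $\phi_i$ convex and $M$-Lipschitz; $g_i$ convex with subgradients of norm $\le L_{g_i}$; a Slater point $\bar x$ ($g_i(\bar x)<0$, $B\bar x+b=0$) exists; the optimal value is finite. Dual: $\widehat n=n+p+m$, $\mathbb{D}=\{u:u_{n+p+1},\dots,u_{\widehat n}\ge0\}$, $L_f(x,u)=f(x)+\langle u_{1:n},A^Tx/n\rangle+\langle u_{n+1:n+p},Bx+b\rangle+\sum_iu_{n+p+i}g_i(x)$,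 $x^*(u)=\arg\min_xL_f(x,u)$, $d(u)=-L_f(x^*(u),u)$ with $\nabla d(u)=-[(A^Tx^*(u)/n)^T,(Bx^*(u)+b)^T,g(x^*(u))^T]^T$ on $\mathbb{D}$; $h_i=\frac1n\phi_i^*$ ($i\le n$, $\phi_i^*$ the convex conjugate), $h_i\equiv0$ ($n<i\le n+p$), $h_i$ = indicator of $[0,\infty)$ ($i>n+p$); $D(u)=d(u)+\sum_ih_i(u_i)$. $L_j=\|A_j\|^2/(n^2\mu)$ ($j\le n$), $\|B_{j-n,:}\|^2/\mu$ ($n<j\le n+p$), $L_{g_{j-n-p}}^2/\mu$ ($j>n+p$). ARDCA: $\theta_0=1/\widehat n$, $\theta_{k+1}=\frac{\sqrt{\theta_k^4+4\theta_k^2}-\theta_k^2}{2}$; $z^0=u^0\in\mathbb{D}$; for $k\ge0$: $v^k=\theta_kz^k+(1-\theta_k)u^k$; for every $i$, $\tilde z_i^k=\arg\min_{w\in\mathbb{R}}\widehat n\theta_kL_i(w-z_i^k)^2+\nabla_id(v^k)(w-z_i^k)+h_i(w)$; $i_k$ uniform on $\{1,\dots,\widehat n\}$; $z^{k+1}_{i_k}=\tilde z^k_{i_k}$, $z^{k+1}_j=z^k_j$ ($j\ne i_k$); $u^{k+1}=v^k+\widehat n\theta_k(z^{k+1}-z^k)$. Auxiliary quantities: $y_i^k=-2\widehat n\theta_kL_i(\tilde z_i^k-z_i^k)-\nabla_id(v^k)$ for $1\le i\le n$, $y^k=(y^k_1,\dots,y^k_n)$; for $i\le n$, $\sigma_1(u_i,\tilde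 z_i^k)=h_i(\tilde z_i^k)+y_i^k(u_i-\tilde z_i^k)-h_i(u_i)$; $\sigma_2(u,v^k)=d(v^k)+\langle\nabla d(v^k),u-v^k\rangle-d(u)$. *)

(* Defs.v *)
From HB Require Import structures.
From mathcomp Require Import all_boot all_order all_algebra.
From mathcomp Require Import all_classical all_reals.
From mathcomp Require Import ereal.
Set Implicit Arguments. Unset Strict Implicit. Unset Printing Implicit Defensive.
Import Order.TTheory GRing.Theory Num.Theory.
Local Open Scope ring_scope.
Local Open Scope classical_set_scope.

(* Dual vectors are functions 'I_(n+p+m) -> R;
   the index set {1..n+p+m} of the paper is 'I_((n+p)+m), split in three
   blocks by blk1 / blk2 / blk3. *)

Section ARDCA.
Variable R : realType.
Variables n t p m : nat.
Variable A : 'M[R]_(t, n).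
Variable B : 'M[R]_(p, t).
Variable b : 'cV[R]_p.
Variable f : 'cV[R]_t -> R.
Variable phi : 'I_n -> R -> R.
Variable g : 'I_m -> 'cV[R]_t -> R.
Variable Lg : 'I_m -> R.
Variable mu : R.

Notation nh := (n + p + m)%N.
Definition blk1 (i : 'I_n) : 'I_nh := lshift m (lshift p i).
Definition blk2 (j : 'I_p) : 'I_nh := lshift m (rshift n j).
Definition blk3 (l : 'I_m) : 'I_nh := rshift (n + p) l.

Definition sqnormc k (v : 'cV[R]_k) : R := \sum_(i < k) v i 0 ^+ 2.
Definition sqnormr k (v : 'rV[R]_k) : R := \sum_(i < k) v 0 i ^+ 2.

(* a point of T minimizing F (chosen by choice; default if none exists) *)
Definition argminR (F : R -> \bar R) : R :=
  xget 0 [set w | forall w', (F w <= F w')%E].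
Definition argminx (F : 'cV[R]_t -> R) : 'cV[R]_t :=
  xget 0 [set x | forall y, F x <= F y].

Definition Lag (x : 'cV[R]_t) (u : 'I_nh -> R) : R :=
  f x + \sum_(i < n) u (blk1 i) * ((A^T *m x) i 0 / n%:R)
      + \sum_(j < p) u (blk2 j) * ((B *m x + b) j 0)
      + \sum_(l < m) u (blk3 l) * g l x.

Definition xstar (u : 'I_nh -> R) : 'cV[R]_t := argminx (fun x => Lag x u).

Definition dual (u : 'I_nh -> R) : R := - Lag (xstar u) u.

(* the gradient of d, given by the explicit formula of the paper *)
Definition gradd (u : 'I_nh -> R) (i : 'I_nh) : R :=
  match fintype.split i with
  | inl i' => match fintype.split i' with
              | inl a => - ((A^T *m xstar u) a 0 / n%:R)
              | inr j => - ((B *m xstar u + b) j 0)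
              end
  | inr l => - g l (xstar u)
  end.

Definition phistar (i : 'I_n) (w : R) : \bar R :=
  ereal_sup [set ((w * y - phi i y)%:E) | y in [set: R]].

Definition hfun (i : 'I_nh) (w : R) : \bar R :=
  match fintype.split i with
  | inl i' => match fintype.split i' with
              | inl a => ((n%:R)^-1)%:E * phistar a w
              | inr _ => 0%E
              end
  | inr _ => if 0 <= w then 0%E else +oo%E
  end.

Definition Dfun (u : 'I_nh -> R) : \bar R :=
  ((dual u)%:E + \sum_(i < nh) hfun i (u i))%E.

Definition Lc (i : 'I_nh) : R :=
  match fintype.split i with
  | inl i' => match fintype.split i' with
              | inl a => sqnormc (col a A) / ((n%:R) ^+ 2 * mu)
              | inr j => sqnormr (row j B) / mu
              end
  | inr l => Lg l ^+ 2 / mu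
  end.

Fixpoint theta (k : nat) : R :=
  match k with
  | 0 => (nh%:R)^-1
  | k'.+1 => (Num.sqrt (theta k' ^+ 4 + 4 * theta k' ^+ 2) - theta k' ^+ 2) / 2
  end.

Definition inD (u : 'I_nh -> R) : Prop := forall l : 'I_m, 0 <= u (blk3 l).

Section Iter.
Variable z0 : 'I_nh -> R.
Variable ik : nat -> 'I_nh.        (* the realization of the random indices *)

Definition vpt k (zu : ('I_nh -> R) * ('I_nh -> R)) : 'I_nh -> R :=
  fun j => theta k * zu.1 j + (1 - theta k) * zu.2 j.

Definition ztil_of k (zu : ('I_nh -> R) * ('I_nh -> R)) (i : 'I_nh) : R :=
  argminR (fun w => ((nh%:R * theta k * Lc i * (w - zu.1 i) ^+ 2
                      + gradd (vpt k zu) i * (w - zu.1 i))%:E + hfun i w)%E).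

Definition step k (zu : ('I_nh -> R) * ('I_nh -> R)) :=
  let z' := fun j => if j == ik k then ztil_of k zu j else zu.1 j in
  (z', fun j => vpt k zu j + nh%:R * theta k * (z' j - zu.1 j)).

Fixpoint state (k : nat) : ('I_nh -> R) * ('I_nh -> R) :=
  match k with
  | 0 => (z0, z0)
  | k'.+1 => step k' (state k')
  end.

Definition zk k := (state k).1.
Definition uk k := (state k).2.
Definition vk k := vpt k (state k).
Definition ztil k := ztil_of k (state k).

Definition yk k (i : 'I_n) : R :=
  - (2 * nh%:R * theta k * Lc (blk1 i) * (ztil k (blk1 i) - zk k (blk1 i)))
  - gradd (vk k) (blk1 i).

Definition sigma1 k (i : 'I_n) (ui : R) : \bar R :=
  (hfun (blk1 i) (ztil k (blk1 i)) + (yk k i * (ui - ztil k (blk1 i)))%:E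
   - hfun (blk1 i) ui)%E.

Definition sigma2 k (u : 'I_nh -> R) : R :=
  dual (vk k) + \sum_(i < nh) gradd (vk k) i * (u i - vk k i) - dual u.
End Iter.

Definition tri (x : 'cV[R]_t) (y : 'I_n -> R) (i : 'I_nh) : R :=
  match fintype.split i with
  | inl i' => match fintype.split i' with
              | inl a => ((A^T *m x) a 0 - y a) / n%:R
              | inr j => (B *m x + b) j 0
              end
  | inr l => g l x
  end.

Definition phisum (y : 'I_n -> R) : R := \sum_(i < n) phi i (y i).

Definition inprod k (s v : 'cV[R]_k) : R := \sum_(i < k) s i 0 * v i 0.

Definition strongly_convex (F : 'cV[R]_t -> R) (c : R) : Prop :=
  forall x y (l : R), 0 <= l <= 1 ->
    F (l *: x + (1 - l) *: y) <=
      l * F x + (1 - l) * F y - c / 2 * l * (1 - l) * sqnormc (x - y).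

Definition convexR (F : R -> R) : Prop :=
  forall x y (l : R), 0 <= l <= 1 ->
    F (l * x + (1 - l) * y) <= l * F x + (1 - l) * F y.

Definition convexV (F : 'cV[R]_t -> R) : Prop :=
  forall x y (l : R), 0 <= l <= 1 ->
    F (l *: x + (1 - l) *: y) <= l * F x + (1 - l) * F y.

Definition subgrad (F : 'cV[R]_t -> R) (x s : 'cV[R]_t) : Prop :=
  forall y, F x + inprod s (y - x) <= F y.

Definition primal_obj (x : 'cV[R]_t) : R :=
  f x + (n%:R)^-1 * \sum_(i < n) phi i ((A^T *m x) i 0).

Definition feasible (x : 'cV[R]_t) : Prop :=
  B *m x + b = 0 /\ forall l, g l x <= 0.

Definition assumption1 (M : R) : Prop :=
  0 < mu /\ strongly_convex f mu /\
  (forall i, convexR (phi i)) /\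
  (forall i a c, `|phi i a - phi i c| <= M * `|a - c|) /\
  (forall l, convexV (g l)) /\
  (forall l x s, subgrad (g l) x s -> Num.sqrt (sqnormc s) <= Lg l) /\
  (exists xb, B *m xb + b = 0 /\ forall l, g l xb < 0) /\
  (exists c, forall x, feasible x -> c <= primal_obj x).

End ARDCA.

(* Main.v *)
Require Import Defs.
From HB Require Import structures.
From mathcomp Require Import all_boot all_order all_algebra.
From mathcomp Require Import all_classical all_reals.
From mathcomp Require Import ereal.
From mathcomp Require Import all_analysis.
From mathcomp Require Import ring lra.
Import Order.TTheory GRing.Theory Num.Theory.
Import numFieldNormedType.Exports.
Set Implicit Arguments. Unset Strict Implicit.
Local Open Scope ring_scope.
Local Open Scope classical_set_scope.
Definition conjF (R : realType) (F : R -> R) (w : R) : \bar R :=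
  ereal_sup [set ((w * y - F y)%:E) | y in [set: R]].

Lemma conj_ub (R : realType) (F : R -> R) w y : ((w * y - F y)%:E <= conjF F w)%E.
Proof. by apply: ereal_sup_ubound; exists y. Qed.

Lemma conj_eq (R : realType) (F : R -> R) w s :
  (forall t, F s + w * (t - s) <= F t) -> conjF F w = (w * s - F s)%:E.
Proof.
move=> H; apply/le_anti/andP; split; last exact: conj_ub.
apply: ge_ereal_sup => _ [y _ <-]; rewrite lee_fin.
have := H y; lra.
Qed.
Lemma lip_cont (R : realType) (F : R -> R) (M : R) :
  (forall a c, `|F a - F c| <= M * `|a - c|) -> continuous F.
Proof.
move=> HL x; apply/cvgrPdist_le => e e0.
apply/nbhs_ballP; exists (e / (`|M| + 1)); rewrite /=.
  by apply: divr_gt0 => //; rewrite ltr_wpDl.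
move=> y; rewrite /ball_ /= => hy.
apply: (le_trans (HL x y)).
apply: (le_trans (y := `|M| * `|x - y|)).
  by apply: ler_wpM2r => //; apply: ler_norm.
have h1 : 0 < `|M| + 1 by rewrite ltr_wpDl.
rewrite ltr_pdivlMr // in hy.
have := normr_ge0 M; have := normr_ge0 (x - y); nra.
Qed.
Lemma quad_min (R : realType) (F : R -> R) (M c be : R) :
  (forall a c, `|F a - F c| <= M * `|a - c|) -> 0 < c ->
  exists s, forall t, F s + c * s ^+ 2 - be * s <= F t + c * t ^+ 2 - be * t.
Proof.
move=> HL c0.
pose G := fun s : R => F s + c * s ^+ 2 - be * s.
have Gc : continuous G.
  move=> x; apply: cvgB; first apply: cvgD.
  - exact: lip_cont HL x.
  - apply: cvgM; first exact: cvg_cst.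
    by rewrite expr2; apply: cvgM; exact: cvg_id.
  - by apply: cvgM; [exact: cvg_cst| exact: cvg_id].
pose K := (`|M| + `|be|) / c.
have K0 : 0 <= K by rewrite /K divr_ge0 // ?addr_ge0 // ltW.
have [s sK smin] : exists2 s, s \in `[- K, K]%R & forall t, t \in `[- K, K]%R -> G s <= G t.
  apply: EVT_min; first by apply: (le_trans (y := 0)); rewrite ?oppr_le0 ?K0.
  exact: continuous_subspaceT.
exists s => t; rewrite -/(G s) -/(G t).
have [tK|tK] := leP `|t| K.
  by apply: smin; rewrite in_itv /= -ler_norml.
apply: (le_trans (smin 0 _)); first by rewrite in_itv /= oppr_le0 K0.
rewrite /G expr0n /= !mulr0 addr0 subr0.
have h1 := HL t 0; rewrite subr0 in h1.
have h2 : - (`|M| * `|t|) <= F t - F 0.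
  rewrite lerNl; apply: (le_trans (ler_norm _)).
  rewrite normrN; apply: (le_trans h1).
  by apply: ler_wpM2r => //; apply: ler_norm.
have h3 : be * t <= `|be| * `|t|.
  by rewrite -normrM; apply: ler_norm.
have h4 : t ^+ 2 = `|t| ^+ 2 by rewrite real_normK // num_real.
have h5 : `|M| + `|be| < c * `|t| by rewrite /K ltr_pdivrMr // mulrC in tK.
have := normr_ge0 t; have := normr_ge0 M; have := normr_ge0 be.
rewrite h4; nra.
Qed.
Lemma foc (R : realType) (F : R -> R) (c be s : R) :
  (forall x y (l : R), 0 <= l <= 1 -> F (l * x + (1 - l) * y) <= l * F x + (1 - l) * F y) ->
  0 <= c ->
  (forall t, F s + c * s ^+ 2 - be * s <= F t + c * t ^+ 2 - be * t) ->
  forall t, F s + (be - 2 * c * s) * (t - s) <= F t.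
Proof.
move=> Hc c0 Hmin t.
apply/ler_addgt0Pr => e e0.
set d := t - s.
set K := c * d ^+ 2.
have K0 : 0 <= K by rewrite /K mulr_ge0 // sqr_ge0.
set l := e / (e + K + 1).
have D0 : 0 < e + K + 1 by lra.
have l0 : 0 < l by rewrite /l divr_gt0.
have l1 : l <= 1 by rewrite /l ler_pdivrMr // mul1r; lra.
have lK : l * K <= e.
  rewrite /l mulrAC ler_pdivrMr //.
  have := ltW e0; nra.
have H1 := Hmin (l * t + (1 - l) * s).
have H2 := Hc t s l; rewrite (ltW l0) l1 in H2; have {H2} H2 := H2 isT.
have E : l * t + (1 - l) * s = s + l * d by rewrite /d; ring.
rewrite E in H1 H2.
have H3 : 0 <= l * (F t - F s - (be - 2 * c * s) * d + l * K).
  rewrite /K; nra.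
have H4 : 0 <= F t - F s - (be - 2 * c * s) * d + l * K.
  by rewrite (pmulr_rge0 _ l0) in H3.
lra.
Qed.

Lemma slope3 (R : realType) (F : R -> R) (u s t : R) :
  (forall x y (l : R), 0 <= l <= 1 -> F (l * x + (1 - l) * y) <= l * F x + (1 - l) * F y) ->
  u < s -> s < t -> (F s - F u) * (t - s) <= (F t - F s) * (s - u).
Proof.
move=> Hc us st.
have D0 : 0 < t - u by lra.
set l := (t - s) / (t - u).
have l0 : 0 <= l by rewrite /l divr_ge0 //; lra.
have l1 : l <= 1 by rewrite /l ler_pdivrMr // mul1r; lra.
have := Hc u t l; rewrite l0 l1 => /(_ isT).
have -> : l * u + (1 - l) * t = s.
  rewrite /l; field; exact: lt0r_neq0.
move=> H.
have E1 : 1 - l = (s - u) / (t - u) by rewrite /l; field; exact: lt0r_neq0.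
rewrite E1 /l in H.
have hq : (t - u) * (t - u)^-1 = 1 by rewrite mulfV // lt0r_neq0.
set q := (t - u)^-1 in H hq.
have H2 := ler_wpM2l (ltW D0) H.
have E2 : (t - u) * ((t - s) * q * F u + (s - u) * q * F t) = (t - s) * F u + (s - u) * F t.
  transitivity (((t - u) * q) * ((t - s) * F u + (s - u) * F t)); first by ring.
  by rewrite hq mul1r.
rewrite E2 in H2; nra.
Qed.

Lemma subgrad_ex (R : realType) (F : R -> R) (s : R) :
  (forall x y (l : R), 0 <= l <= 1 -> F (l * x + (1 - l) * y) <= l * F x + (1 - l) * F y) ->
  exists w, forall t, F s + w * (t - s) <= F t.
Proof.
move=> Hc.
pose S := [set (F s - F u) / (s - u) | u in [set u | u < s]].
have Sne : S !=set0 by exists ((F s - F (s - 1)) / (s - (s - 1))); exists (s - 1) => //=; lra.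
have ubS : forall t, s < t -> ubound S ((F t - F s) / (t - s)).
  move=> t st _ [u /= us <-].
  have h1 : 0 < s - u by lra.
  have h2 : 0 < t - s by lra.
  rewrite ler_pdivrMr // mulrAC ler_pdivlMr //.
  exact: slope3.
have hub : has_ubound S by exists ((F (s + 1) - F s) / (s + 1 - s)); apply: ubS; lra.
exists (sup S) => t.
have [ts|st|->] := ltgtP t s; last by rewrite subrr mulr0 addr0.
- have : (F s - F t) / (s - t) <= sup S by apply: ub_le_sup => //; exists t.
  have h1 : 0 < s - t by lra.
  rewrite ler_pdivrMr // => h; nra.
- have : sup S <= (F t - F s) / (t - s) by apply: ge_sup => //; apply: ubS.
  have h1 : 0 < t - s by lra.
  rewrite ler_pdivlMr // => h; nra.
Qed.

Lemma conj_key (R : realType) (F : R -> R) (M nn a z g : R)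
  (Obj : R -> \bar R) :
  (forall x y (l : R), 0 <= l <= 1 -> F (l * x + (1 - l) * y) <= l * F x + (1 - l) * F y) ->
  (forall a c, `|F a - F c| <= M * `|a - c|) ->
  0 < nn -> 0 <= a ->
  (forall w, Obj w = ((a * (w - z) ^+ 2 + g * (w - z))%:E + (nn^-1)%:E * conjF F w)%E) ->
  let w' := xget 0 [set w | forall w2, (Obj w <= Obj w2)%E] in
  ((nn^-1)%:E * conjF F w' =
    ((w' * (nn * (-(2 * a * (w' - z)) - g)) - F (nn * (-(2 * a * (w' - z)) - g))) / nn)%:E)%E.
Proof.
move=> Hcv HL nn0 a0 HO w'.
have nnV : 0 <= nn^-1 by rewrite invr_ge0 ltW.
have Ofin : forall v s, (((a * (v - z) ^+ 2 + g * (v - z)) + (v * s - F s) / nn)%:E <= Obj v)%E.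
  move=> v s; rewrite HO EFinD; apply: leeD2l.
  rewrite mulrC EFinM; apply: lee_wpmul2l; first by rewrite lee_fin.
  exact: conj_ub.
have [a0'|apos] := eqVneq a 0.
-
  subst a.
  set s := - (nn * g).
  have [wc Hsub] := subgrad_ex s Hcv.
  have Hcw := conj_eq Hsub.
  set V := (s * z - F s) / nn.
  have hq : nn * nn^-1 = 1 by rewrite mulfV // lt0r_neq0.
  have E1 : g = - s * nn^-1 by rewrite /s opprK mulrAC hq mul1r.
  have Hlow : forall v, (V%:E <= Obj v)%E.
    move=> v; apply: le_trans (Ofin v s); rewrite lee_fin /V.
    rewrite le_eqVlt; apply/orP; left; apply/eqP.
    rewrite E1; field; exact: lt0r_neq0.
  have Hwc : (Obj wc <= V%:E)%E.
    rewrite HO Hcw -EFinM -EFinD lee_fin /V.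
    rewrite le_eqVlt; apply/orP; left; apply/eqP.
    rewrite E1; field; exact: lt0r_neq0.
  have Hmin : [set w | forall w2, (Obj w <= Obj w2)%E] w'.
    apply: xgetPex; exists wc => w2; exact: le_trans Hwc (Hlow w2).
  have Heq : Obj w' = V%:E.
    apply/le_anti/andP; split; last exact: Hlow.
    exact: le_trans (Hmin wc) Hwc.
  move: Heq; rewrite HO.
  have := conj_ub F w' s.
  case: (conjF F w') => [r| |] //=; last first.
    by move=> _; rewrite gt0_muley ?lte_fin ?invr_gt0.
  move=> _ Hr.
  have {}Hr : 0 * (w' - z) ^+ 2 + g * (w' - z) + nn^-1 * r = V.
    by apply: EFin_inj; rewrite EFinD EFinM.
  rewrite -EFinM; congr (_%:E).
  have -> : nn * (- (2 * 0 * (w' - z)) - g) = s by rewrite /s; ring.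
  move: Hr; rewrite /V E1 => Hr.
  set q := nn^-1 in Hr *.
  rewrite mul0r add0r in Hr.
  have E3 : q * r = (s * z - F s) * q + s * q * (w' - z).
    rewrite -Hr; ring.
  rewrite E3; ring.
-
  have ap : 0 < a by rewrite lt0r apos.
  have nnz : nn != 0 by exact: lt0r_neq0.
  have c0 : 0 < (4 * nn * a)^-1 by rewrite invr_gt0 !mulr_gt0.
  have [sig Hsig] := @quad_min R F M _ (z - g / (2 * a)) HL c0.
  have Hsub := foc Hcv (ltW c0) Hsig.
  have Hcw := conj_eq Hsub.
  set w := z - g / (2 * a) - 2 * (4 * nn * a)^-1 * sig in Hcw.
  have Hs : nn * (- (2 * a * (w - z)) - g) = sig.
    by rewrite /w; field; apply/andP; split.
  have Eg : g = - sig / nn - 2 * a * (w - z).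
    clearbody w; rewrite -Hs; field; exact: nnz.
  set V := a * (w - z) ^+ 2 + g * (w - z) + (w * sig - F sig) / nn.
  have HOw : Obj w = V%:E by rewrite HO Hcw -EFinM -EFinD /V; congr (_%:E); ring.
  have Hlow : forall v, ((V + a * (v - w) ^+ 2)%:E <= Obj v)%E.
    move=> v; apply: le_trans (Ofin v sig); rewrite lee_fin /V.
    rewrite le_eqVlt; apply/orP; left; apply/eqP.
    rewrite Eg; set q := nn^-1; ring.
  have Hmin : [set w | forall w2, (Obj w <= Obj w2)%E] w'.
    apply: xgetPex; exists w => w2; rewrite HOw; apply: le_trans (Hlow w2).
    by rewrite lee_fin lerDl; apply: mulr_ge0; [exact: ltW | exact: sqr_ge0].
  have Ew : w' = w.
    have h1 := le_trans (Hlow w') (Hmin w); rewrite HOw lee_fin gerDl in h1.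
    have h2 : (w' - w) ^+ 2 <= 0 by rewrite -(pmulr_rle0 _ ap).
    have h3 : (w' - w) ^+ 2 = 0 by apply/le_anti; rewrite h2 sqr_ge0.
    by apply/eqP; rewrite -subr_eq0 -sqrf_eq0 h3.
  rewrite Ew Hs Hcw -EFinM mulrC.
  done.
Qed.

Lemma sum3 (T : Type) (idx : T) (op : Monoid.com_law idx) (n p m : nat)
  (G : 'I_(n + p + m) -> T) :
  \big[op/idx]_(i < n + p + m) G i =
  op (op (\big[op/idx]_(i < n) G (blk1 p m i)) (\big[op/idx]_(j < p) G (blk2 n m j)))
     (\big[op/idx]_(l < m) G (blk3 n p l)).
Proof. by rewrite big_split_ord big_split_ord. Qed.

Lemma sum3R (R : realType) (n p m : nat) (G : 'I_(n + p + m) -> R) :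
  \sum_(i < n + p + m) G i =
  \sum_(i < n) G (blk1 p m i) + \sum_(j < p) G (blk2 n m j) + \sum_(l < m) G (blk3 n p l).
Proof. by rewrite !big_split_ord. Qed.

Lemma sum3E (R : realType) (n p m : nat) (G : 'I_(n + p + m) -> \bar R) :
  (\sum_(i < n + p + m) G i =
  \sum_(i < n) G (blk1 p m i) + \sum_(j < p) G (blk2 n m j) + \sum_(l < m) G (blk3 n p l))%E.
Proof. by rewrite !big_split_ord. Qed.

Lemma EQ (R : realType) n (a : 'I_n -> R) (H : 'I_n -> \bar R) (K1 K2 : R) :
  (forall i, H i != -oo%E) -> - (\sum_(i < n) a i) - K1 = K2 ->
  (- (\sum_(i < n) ((a i)%:E - H i)) - K1%:E = K2%:E + \sum_(i < n) H i)%E.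
Proof.
move=> Hn HK.
case: (boolP [forall i, H i \is a fin_num]) => [/forallP Hf|].
  rewrite (eq_bigr (fun i => (a i - fine (H i))%:E)); last first.
    by move=> i _; rewrite EFinB fineK.
  rewrite -(EFin_sum_fine _ (fun i _ => Hf i)) sumEFin.
  rewrite -EFinN -EFinB -EFinD; congr (_%:E).
  rewrite sumrB; lra.
rewrite negb_forall => /existsP [j Hj].
have Hjy : H j = +oo%E.
  by move: (Hn j) Hj; case: (H j).
have -> : (\sum_(i < n) ((a i)%:E - H i) = -oo)%E.
  by apply/esum_eqNyP; exists j; rewrite mem_index_enum Hjy.
have -> : (\sum_(i < n) H i = +oo)%E.
  by apply/esum_eqyP => //; exists j; rewrite mem_index_enum Hjy.
by [].
Qed.

Lemma shapeR (R : realType) (T du fX Ph : R) (e : \bar R) :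
  (T%:E + (du%:E + e) + fX%:E + Ph%:E = (T + du + fX + Ph)%:E + e)%E.
Proof.
case: e => [r| |] //=.
by rewrite -!EFinD; congr (_%:E); ring.
Qed.

Lemma split_l m n (i : 'I_m) : fintype.split (lshift n i) = inl i.
Proof. exact: (unsplitK (inl i)). Qed.
Lemma split_r m n (j : 'I_n) : fintype.split (rshift m j) = inr j.
Proof. exact: (unsplitK (inr j)). Qed.

Lemma theta_ge0 (R : realType) n p m k : 0 <= theta R n p m k.
Proof.
elim: k => [|k IH] /=; first by rewrite invr_ge0.
apply: divr_ge0 => //; rewrite subr_ge0.
set th := theta R n p m k.
have -> : th ^+ 2 = Num.sqrt ((th ^+ 2) ^+ 2) by rewrite sqrtr_sqr ger0_norm // sqr_ge0.
apply: ler_wsqrtr; rewrite -exprM /= lerDl; apply: mulr_ge0 => //; exact: sqr_ge0.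
Qed.

Unset Implicit Arguments.
Theorem lemma4 (R : realType) (n t p m : nat)
  (A : 'M[R]_(t, n)) (B : 'M[R]_(p, t)) (b : 'cV[R]_p)
  (f : 'cV[R]_t -> R) (phi : 'I_n -> R -> R) (g : 'I_m -> 'cV[R]_t -> R)
  (Lg : 'I_m -> R) (mu M : R) :
  (0 < n)%N -> (0 < t)%N ->
  assumption1 A B b f phi g Lg mu M ->
  forall (z0 : 'I_(n + p + m) -> R) (ik : nat -> 'I_(n + p + m)),
  inD z0 ->
  forall (k : nat) (u : 'I_(n + p + m) -> R), inD u ->
  let x := xstar A B b f g (vk A B b f phi g Lg mu z0 ik k) in
  let y := yk A B b f phi g Lg mu z0 ik k in
  (- (\sum_(i < n) sigma1 A B b f phi g Lg mu z0 ik k i (u (blk1 p m i)))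
   - (sigma2 A B b f phi g Lg mu z0 ik k u)%:E
   = (\sum_(i < n + p + m) tri A B b g x (fun j => n%:R * y j) i * u i)%:E
     + Dfun A B b f phi g u + (f x)%:E
     + ((n%:R)^-1 * phisum phi (fun j => n%:R * y j))%:E)%E.
Proof.
move=> n0 t0 [mu0 [_ [Hconv [HLip _]]]] z0 ik _ k u Hu x y.
have nn0 : 0 < n%:R :> R by rewrite ltr0n.
have nnz : n%:R != 0 :> R by rewrite lt0r_neq0.
have Ey : y = yk A B b f phi g Lg mu z0 ik k := erefl.
have Ex : x = xstar A B b f g (vk A B b f phi g Lg mu z0 ik k) := erefl.
have key : forall i : 'I_n,
  hfun phi (blk1 p m i) (ztil A B b f phi g Lg mu z0 ik k (blk1 p m i)) =
  ((ztil A B b f phi g Lg mu z0 ik k (blk1 p m i) * (n%:R * y i)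
    - phi i (n%:R * y i)) / n%:R)%:E.
  move=> i.
  set a := (n + p + m)%:R * theta R n p m k * Lc A B Lg mu (blk1 p m i).
  have a0 : 0 <= a.
    rewrite /a; apply: mulr_ge0; first by apply: mulr_ge0 => //; exact: theta_ge0.
    rewrite /Lc /blk1 !split_l; apply: divr_ge0.
      by apply: sumr_ge0 => j _; exact: sqr_ge0.
    by apply: mulr_ge0; [exact: sqr_ge0 | exact: ltW].
  have Hfun : forall w, hfun phi (blk1 p m i) w = (((n%:R)^-1)%:E * conjF (phi i) w)%E.
    by move=> w; rewrite /hfun /blk1 !split_l.
  set zz := zk A B b f phi g Lg mu z0 ik k (blk1 p m i).
  set gg := gradd A B b f g (vk A B b f phi g Lg mu z0 ik k) (blk1 p m i).
  pose Obj := fun w => ((a * (w - zz) ^+ 2 + gg * (w - zz))%:E + hfun phi (blk1 p m i) w)%E.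
  have HO : forall w, Obj w = ((a * (w - zz) ^+ 2 + gg * (w - zz))%:E + ((n%:R)^-1)%:E * conjF (phi i) w)%E.
    by move=> w; rewrite /Obj Hfun.
  have H := conj_key (Hconv i) (HLip i) nn0 a0 HO.
  rewrite Hfun.
  have Eyi : y i = - (2 * a * (ztil A B b f phi g Lg mu z0 ik k (blk1 p m i) - zz)) - gg.
    by rewrite Ey /yk /a /zz /gg; ring.
  rewrite Eyi.
  exact: H.
pose H := fun i : 'I_n => hfun phi (blk1 p m i) (u (blk1 p m i)).
pose zt := fun i : 'I_n => ztil A B b f phi g Lg mu z0 ik k (blk1 p m i).
pose ra := fun i : 'I_n => (zt i * (n%:R * y i) - phi i (n%:R * y i)) / n%:R
                          + y i * (u (blk1 p m i) - zt i).
rewrite (eq_bigr (fun i => ((ra i)%:E - H i)%E)); last first.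
  by move=> i _; rewrite /sigma1 key -EFinD.
have S2 : (\sum_(j < p) hfun phi (blk2 n m j) (u (blk2 n m j)) = 0)%E.
  by rewrite big1 // => j _; rewrite /hfun /blk2 split_l split_r.
have S3 : (\sum_(l < m) hfun phi (blk3 n p l) (u (blk3 n p l)) = 0)%E.
  by rewrite big1 // => l _; rewrite /hfun /blk3 split_r (Hu l).
rewrite /Dfun sum3E S2 S3 !adde0 shapeR.
apply: EQ.
  move=> i; rewrite /H /hfun /blk1 !split_l.
  have : ((u (lshift m (lshift p i)) * 0 - phi i 0)%:E <= phistar phi i (u (lshift m (lshift p i))))%E.
    exact: conj_ub.
  case: (phistar phi i _) => [r _|_|//].
    by [].
  by rewrite gt0_muley ?lte_fin ?invr_gt0.
rewrite /sigma2 !sum3R.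
set V := vk A B b f phi g Lg mu z0 ik k.
have Edv : dual A B b f g V = - (f x
    + \sum_(i < n) V (blk1 p m i) * ((A^T *m x) i 0 / n%:R)
    + \sum_(j < p) V (blk2 n m j) * ((B *m x + b) j 0)
    + \sum_(l < m) V (blk3 n p l) * g l x) := erefl.
have B1 : - \sum_(i < n) ra i
    - \sum_(i < n) gradd A B b f g V (blk1 p m i) * (u (blk1 p m i) - V (blk1 p m i))
    + \sum_(i < n) V (blk1 p m i) * ((A^T *m x) i 0 / n%:R)
    = \sum_(i < n) tri A B b g x (fun j => n%:R * y j) (blk1 p m i) * u (blk1 p m i)
      + n%:R^-1 * phisum phi (fun j => n%:R * y j).
  rewrite /phisum mulr_sumr -!sumrN -!big_split /=; apply: eq_bigr => i _.
  rewrite /ra /tri /gradd /blk1 !split_l -Ex; field; exact: nnz.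
have B2 : - \sum_(j < p) gradd A B b f g V (blk2 n m j) * (u (blk2 n m j) - V (blk2 n m j))
    + \sum_(j < p) V (blk2 n m j) * ((B *m x + b) j 0)
    = \sum_(j < p) tri A B b g x (fun j => n%:R * y j) (blk2 n m j) * u (blk2 n m j).
  rewrite -!sumrN -!big_split /=; apply: eq_bigr => j _.
  rewrite /tri /gradd /blk2 split_l split_r -Ex; ring.
have B3 : - \sum_(l < m) gradd A B b f g V (blk3 n p l) * (u (blk3 n p l) - V (blk3 n p l))
    + \sum_(l < m) V (blk3 n p l) * g l x
    = \sum_(l < m) tri A B b g x (fun j => n%:R * y j) (blk3 n p l) * u (blk3 n p l).
  rewrite -!sumrN -!big_split /=; apply: eq_bigr => l _.
  rewrite /tri /gradd /blk3 split_r -Ex; ring.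
rewrite Edv.
lra.
Qed.
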